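(* Let $G$ be a group, $S$ a nonempty multiset of elements of $G$, and $\Gamma=\Phi(G,S)$. Then each connected component of $\Gamma$ is isomorphic to $\Phi(\langle S\rangle,S)$, and the set of connected components of $\Gamma$ is in one-to-one correspondence with the set of right cosets of $\langle S\rangle$ in $G$.
   Context: $\langle S\rangle$ is the subgroup generated by the elements of $S$. For a group $G$ and a multiset $S$ of elements of $G$, $\Phi(G,S)$ is the multigraph (parallel edges allowed, edges labeled by elements of $G$) whose vertex set is the union over the members $s$ of $S$ (with multiplicity, a repeated element giving a separate copy of its cosets per occurrence) of $V_s=\{\langle s\rangle x: x\in G\}$ (right cosets), with, for $\langle s\rangle x\in V_s$, $\langle t\rangle y\in V_t$, $s,t$ distinct members of $S$, one edge labeled $g$ between them for each $g\in\langle s\rangle x\cap\langle t\rangle y$, and no other edges. Isomorphism means isomorphism of multigraphs (bijections on vertices and edges compatible with incidence). *)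

(* Defs.v *)
From Stdlib Require Import ProofIrrelevance Relation_Operators.
From mathcomp Require Import ssreflect ssrfun ssrbool.

Set Implicit Arguments.
Unset Strict Implicit.
Unset Printing Implicit Defensive.

Record group := Group {
  gcar :> Type;
  gmul : gcar -> gcar -> gcar;
  gone : gcar;
  ginv : gcar -> gcar;
  gmulA : forall x y z, gmul x (gmul y z) = gmul (gmul x y) z;
  gmul1g : forall x, gmul gone x = x;
  gmulVg : forall x, gmul (ginv x) x = gone }.

Definition is_subgroup (G : group) (H : G -> Prop) : Prop :=
  [/\ H (gone G), (forall x y, H x -> H y -> H (gmul x y)) & (forall x, H x -> H (ginv x))].

Definition gen (G : group) (A : G -> Prop) : G -> Prop :=
  fun x => forall H : G -> Prop, is_subgroup H -> (forall a, A a -> H a) -> H x.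

Definition rcoset (G : group) (H : G -> Prop) (x : G) : G -> Prop :=
  fun g => exists h, H h /\ g = gmul h x.

Definition is_rcoset (G : group) (H : G -> Prop) (C : G -> Prop) : Prop :=
  exists x, C = rcoset H x.

(* the set of elements of a family (the support of the multiset) *)
Definition frange (G : group) (I : Type) (s : I -> G) : G -> Prop :=
  fun a => exists i, s i = a.

Section SubGroup.
Variables (G : group) (A : G -> Prop).

Definition sg_car := { x : G | gen A x }.

Lemma gen1 : gen A (gone G).
Proof. by move=> H [h1 _ _] _. Qed.
Lemma genM x y : gen A x -> gen A y -> gen A (gmul x y).
Proof. move=> hx hy H hH hA; case: (hH) => _ hM _; exact: hM (hx H hH hA) (hy H hH hA). Qed.
Lemma genV x : gen A x -> gen A (ginv x).
Proof. move=> hx H hH hA; case: (hH) => _ _ hV; exact: hV (hx H hH hA). Qed.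

Definition sg_mul (x y : sg_car) : sg_car :=
  exist _ (gmul (proj1_sig x) (proj1_sig y)) (genM (proj2_sig x) (proj2_sig y)).
Definition sg_one : sg_car := exist _ (gone G) gen1.
Definition sg_inv (x : sg_car) : sg_car := exist _ (ginv (proj1_sig x)) (genV (proj2_sig x)).

Lemma sg_eq (x y : sg_car) : proj1_sig x = proj1_sig y -> x = y.
Proof.
case: x => x px; case: y => y py /= exy; subst y.
by rewrite (proof_irrelevance _ px py).
Qed.

Lemma sg_mulA x y z : sg_mul x (sg_mul y z) = sg_mul (sg_mul x y) z.
Proof. apply: sg_eq; exact: gmulA. Qed.
Lemma sg_mul1g x : sg_mul sg_one x = x.
Proof. apply: sg_eq; exact: gmul1g. Qed.
Lemma sg_mulVg x : sg_mul (sg_inv x) x = sg_one.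
Proof. apply: sg_eq; exact: gmulVg. Qed.

Definition sub_group : group := Group sg_mulA sg_mul1g sg_mulVg.
End SubGroup.

(* the multiset S, viewed as a multiset of elements of <S> *)
Definition sub_fam (G : group) (I : Type) (s : I -> G) : I -> sub_group (frange s) :=
  fun i => exist (gen (frange s)) (s i) (fun H _ hA => hA (s i) (ex_intro _ i erefl)).

Record multigraph := MG { mV : Type; mE : Type; minc : mE -> mV -> Prop }.

Definition mg_iso (A B : multigraph) : Prop :=
  exists (fV : mV A -> mV B) (fE : mE A -> mE B),
    [/\ bijective fV, bijective fE & forall e v, minc e v <-> minc (fE e) (fV v)].

Definition mg_adj (A : multigraph) (u v : mV A) : Prop :=
  exists e, minc e u /\ minc e v.

Definition mg_conn (A : multigraph) : mV A -> mV A -> Prop :=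
  clos_refl_trans (mV A) (@mg_adj A).

Definition is_component (A : multigraph) (K : mV A -> Prop) : Prop :=
  exists v, K = mg_conn v.

Definition comp_graph (A : multigraph) (K : mV A -> Prop) : multigraph :=
  @MG { v : mV A | K v } { e : mE A | exists v, K v /\ minc e v }
      (fun e v => minc (proj1_sig e) (proj1_sig v)).

Section Phi.
Variables (G : group) (I : Type) (s : I -> G).

Definition cyc (a : G) : G -> Prop := gen (fun b => b = a).

(* vertices: pairs (member i of S, right coset of <s_i>) -- disjoint union of the V_{s_i} *)
Definition PhiV := { p : I * (G -> Prop) | is_rcoset (cyc (s p.1)) p.2 }.

Definition pv_mem (u : PhiV) : I := (proj1_sig u).1.
Definition pv_set (u : PhiV) : G -> Prop := (proj1_sig u).2.

(* edges: an unordered pair {u, v} of vertices belonging to distinct members of S,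
   together with a label g in the intersection of the two cosets *)
Definition PhiE := { q : (PhiV -> Prop) * G |
  exists u v : PhiV, [/\ pv_mem u <> pv_mem v,
                         q.1 = (fun w => w = u \/ w = v),
                         pv_set u q.2 & pv_set v q.2] }.

Definition edge_label (e : PhiE) : G := (proj1_sig e).2.

Definition PhiInc (e : PhiE) (w : PhiV) : Prop := (proj1_sig e).1 w.

Definition Phi : multigraph := @MG PhiV PhiE PhiInc.
End Phi.

(* Main.v *)
Require Import Defs.
From Stdlib Require Import ProofIrrelevance Relation_Operators FunctionalExtensionality PropExtensionality Classical.
From mathcomp Require Import ssreflect ssrfun ssrbool.
Set Implicit Arguments. Unset Strict Implicit. Unset Printing Implicit Defensive.

Section GroupLemmas.
Variable G : group.
Implicit Types x y z : G.
Lemma mulgV x : gmul x (ginv x) = gone G.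
Proof.
have e : gmul (gmul x (ginv x)) (gmul x (ginv x)) = gmul x (ginv x).
  by rewrite -gmulA (gmulA (ginv x)) gmulVg gmul1g.
by rewrite -[LHS]gmul1g -(gmulVg (gmul x (ginv x))) -gmulA e.
Qed.
Lemma mulg1 x : gmul x (gone G) = x.
Proof. by rewrite -(gmulVg x) gmulA mulgV gmul1g. Qed.
Lemma mulKg x y : gmul (ginv x) (gmul x y) = y.
Proof. by rewrite gmulA gmulVg gmul1g. Qed.
Lemma mulVKg x y : gmul x (gmul (ginv x) y) = y.
Proof. by rewrite gmulA mulgV gmul1g. Qed.
Lemma mulgK x y : gmul (gmul y x) (ginv x) = y.
Proof. by rewrite -gmulA mulgV mulg1. Qed.
Lemma mulgKV x y : gmul (gmul y (ginv x)) x = y.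
Proof. by rewrite -gmulA gmulVg mulg1. Qed.
Lemma invg_uniq x y : gmul x y = gone G -> ginv x = y.
Proof. by move=> e; rewrite -(mulg1 (ginv x)) -e mulKg. Qed.
Lemma invgK x : ginv (ginv x) = x.
Proof. by apply: invg_uniq; rewrite gmulVg. Qed.
Lemma invMg x y : ginv (gmul x y) = gmul (ginv y) (ginv x).
Proof. by apply: invg_uniq; rewrite -gmulA (gmulA y) mulgV gmul1g mulgV. Qed.
Lemma mulg_canr x y z : gmul y x = gmul z x -> y = z.
Proof. by move=> e; rewrite -(mulgK x y) e mulgK. Qed.

Lemma gen_sub (A : G -> Prop) : is_subgroup (gen A).
Proof. split; [exact: gen1 | exact: genM | exact: genV]. Qed.
Lemma gen_in (A : G -> Prop) a : A a -> gen A a.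
Proof. by move=> ha H _ hA; apply: hA. Qed.
Lemma gen_min (A : G -> Prop) (K : G -> Prop) : is_subgroup K -> (forall a, A a -> K a) ->
  forall x, gen A x -> K x.
Proof. by move=> hK hA x hx; apply: hx. Qed.

Lemma rcosetP (K : G -> Prop) x z : is_subgroup K -> (rcoset K x z <-> K (gmul z (ginv x))).
Proof.
case=> h1 hM hV; split.
  by case=> h [hh ->]; rewrite mulgK.
by move=> hz; exists (gmul z (ginv x)); split => //; rewrite mulgKV.
Qed.
End GroupLemmas.

Ltac gsimpl := do 4 rewrite ?invMg ?invgK ?gmul1g ?mulg1 ?gmulVg ?mulgV -?gmulA ?mulKg ?mulVKg.

Lemma sig_hprop_eq (T : Type) (P : T -> Prop) (a b : {x | P x}) :
  proj1_sig a = proj1_sig b -> a = b.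
Proof. case: a => a pa; case: b => b pb /= e; subst; f_equal; apply: proof_irrelevance. Qed.

Lemma pred_ext (T : Type) (P Q : T -> Prop) : (forall x, P x <-> Q x) -> P = Q.
Proof. move=> h; apply: functional_extensionality => x; apply: propositional_extensionality; exact: h. Qed.
Section Vert.
Variables (G : group) (I : Type) (s : I -> G).

Definition vx (k : I) (g : G) : PhiV s :=
  exist _ (k, rcoset (cyc (s k)) g) (ex_intro _ g erefl).

Lemma cyc_sub_gp (a : G) : is_subgroup (cyc a).
Proof. exact: gen_sub. Qed.

Lemma vertex_eq (u v : PhiV s) : pv_mem u = pv_mem v ->
  (forall g, pv_set u g <-> pv_set v g) -> u = v.
Proof.
case: u => [[i C] pu]; case: v => [[j D] pv]; rewrite /pv_mem /pv_set /= => eij h.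
subst j; have eCD : C = D by apply: pred_ext.
subst D; f_equal; apply: proof_irrelevance.
Qed.

Lemma vx_surj (w : PhiV s) : exists x, w = vx (pv_mem w) x.
Proof.
case: w => [[i C] hC]; have [x hx] := hC; exists x; apply: vertex_eq => //= g.
change (C g <-> rcoset (cyc (s i)) x g); simpl in hx; by rewrite hx.
Qed.

Lemma pv_vx (k : I) (g z : G) : pv_set (vx k g) z <-> cyc (s k) (gmul z (ginv g)).
Proof. rewrite /pv_set /=; apply: rcosetP; exact: gen_sub. Qed.

Lemma pv_vx_self k g : pv_set (vx k g) g.
Proof. by apply/pv_vx; rewrite mulgV; apply: gen1. Qed.

Lemma vx_eq k g g' : cyc (s k) (gmul g (ginv g')) -> vx k g = vx k g'.
Proof.
move=> h; apply: vertex_eq => // z; rewrite !pv_vx.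
have hs := cyc_sub_gp (s k); case: hs => h1 hM hV.
split=> hz.
  have := hM _ _ hz h; by gsimpl.
have := hM _ _ hz (hV _ h); by gsimpl.
Qed.

Lemma pv_nonempty (w : PhiV s) : exists g, pv_set w g.
Proof. case: (vx_surj w) => x ->; exists x; exact: pv_vx_self. Qed.

Lemma same_coset (w : PhiV s) a b : pv_set w a -> pv_set w b ->
  cyc (s (pv_mem w)) (gmul a (ginv b)).
Proof.
case: (vx_surj w) => y e; rewrite e /= !pv_vx => ha hb.
have [h1 hM hV] := cyc_sub_gp (s (pv_mem w)).
have := hM _ _ ha (hV _ hb); by gsimpl.
Qed.

Lemma edge_inc (e : PhiE s) w : PhiInc e w -> pv_set w (edge_label e).
Proof.
case: e => [[P g] pf]; rewrite /PhiInc /edge_label /=.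
case: pf => [u [v [_ /= hP hu hv]]]; rewrite hP.
by move=> /= [->|->].
Qed.

Lemma adj_vx k j g : k <> j -> mg_adj (A := Phi s) (vx k g) (vx j g).
Proof.
move=> kj.
have pe : exists u v : PhiV s, [/\ pv_mem u <> pv_mem v,
   (fun w => w = vx k g \/ w = vx j g, g).1 = (fun w => w = u \/ w = v),
   pv_set u (fun w => w = vx k g \/ w = vx j g, g).2 &
   pv_set v (fun w => w = vx k g \/ w = vx j g, g).2].
  by exists (vx k g), (vx j g); split => //=; apply: pv_vx_self.
exists (exist (fun q : (PhiV s -> Prop) * G => exists u v : PhiV s, [/\ pv_mem u <> pv_mem v,
   q.1 = (fun w => w = u \/ w = v), pv_set u q.2 & pv_set v q.2]) _ pe); rewrite /PhiInc /=; split; [left|right] => //.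
Qed.

Lemma conn_sym (u v : PhiV s) : mg_conn (A := Phi s) u v -> mg_conn (A := Phi s) v u.
Proof.
elim=> [x y [e [h1 h2]]| x | x y z _ h1 _ h2].
- by apply: rt_step; exists e.
- exact: rt_refl.
- exact: rt_trans h2 h1.
Qed.

Notation H := (gen (frange s)).

Lemma cyc_H k z : cyc (s k) z -> H z.
Proof. apply: gen_min; first exact: gen_sub. by move=> a ->; apply: gen_in; exists k. Qed.

Lemma conn_H h : H h -> forall g k, mg_conn (A := Phi s) (vx k g) (vx k (gmul h g)).
Proof.
move=> hh; apply: (hh (fun h => forall g k, mg_conn (A := Phi s) (vx k g) (vx k (gmul h g)))).
- split.
  + by move=> g k; rewrite gmul1g; apply: rt_refl.
  + move=> x y hx hy g k; apply: rt_trans (hy g k) _; rewrite -gmulA; exact: hx.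
  + move=> x hx g k; apply: conn_sym; have := hx (gmul (ginv x) g) k; by rewrite mulVKg.
- move=> a [j <-] g k.
  have e : vx j g = vx j (gmul (s j) g).
    apply: vx_eq; gsimpl; apply: genV; exact: gen_in.
  case: (classic (k = j)) => [->|kj]; first by rewrite -e; apply: rt_refl.
  apply: (rt_trans _ _ _ (vx j g)); first by apply: rt_step; apply: adj_vx.
  rewrite e; apply: rt_step; apply: adj_vx => ?; exact: kj.
Qed.

Definition inC (x0 : G) (w : PhiV s) := exists g, pv_set w g /\ H (gmul g (ginv x0)).

Lemma inC_all x0 w g : inC x0 w -> pv_set w g -> H (gmul g (ginv x0)).
Proof.
case=> g' [hg' hH] hg; have := @same_coset w g g' hg hg' => /cyc_H hc.
have [_ hM _] := @gen_sub G (frange s).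
have := hM _ _ hc hH; by gsimpl.
Qed.

Lemma adj_inC x0 u w : mg_adj (A := Phi s) u w -> inC x0 u -> inC x0 w.
Proof.
case=> e [hu hw] hC; exists (edge_label e); split; first exact: edge_inc.
apply: inC_all hC _; exact: edge_inc.
Qed.

Lemma conn_char i0 x0 w : mg_conn (A := Phi s) (vx i0 x0) w <-> inC x0 w.
Proof.
split.
  have base : inC x0 (vx i0 x0).
    exists x0; split; first exact: pv_vx_self. rewrite mulgV; exact: gen1.
  move=> hc; move: hc base; elim=> [a b hab | a | a b c _ h1 _ h2] //.
  - exact: adj_inC.
  - by move=> h; apply: h2; apply: h1.
move=> hC; case: (vx_surj w) => y ew.
have hy : H (gmul y (ginv x0)) by apply: inC_all hC _; rewrite ew; apply: pv_vx_self.
apply: rt_trans; first exact: conn_H hy x0 i0.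
rewrite mulgKV ew.
case: (classic (i0 = pv_mem w)) => [<-|ij]; first exact: rt_refl.
apply: rt_step; exact: adj_vx.
Qed.

Lemma conn_char_eq i0 x0 : mg_conn (A := Phi s) (vx i0 x0) = inC x0.
Proof. apply: pred_ext => w; exact: conn_char. Qed.

End Vert.
Section Part2.
Variables (G : group) (I : Type) (s : I -> G) (i0 : I).
Notation H := (gen (frange s)).

Lemma comp_vx (K : PhiV s -> Prop) : is_component (A := Phi s) K -> exists x, K = inC x.
Proof.
case=> v ->; case: (vx_surj v) => x ->; exists x; exact: conn_char_eq.
Qed.

Definition compC (K : PhiV s -> Prop) : G -> Prop := fun g => exists w, K w /\ pv_set w g.

Lemma compC_proof (K : PhiV s -> Prop) : is_component (A := Phi s) K -> is_rcoset H (compC K).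
Proof.
case/comp_vx => x ->; exists x; apply: pred_ext => g.
rewrite rcosetP; last exact: gen_sub.
split.
  by case=> w [hw hg]; apply: inC_all hw hg.
move=> hg; exists (vx s i0 g); split; last exact: pv_vx_self.
by exists g; split => //; apply: pv_vx_self.
Qed.

Definition fK (K : { K : mV (Phi s) -> Prop | is_component K }) :
  { C : G -> Prop | is_rcoset H C } :=
  exist _ (compC (proj1_sig K)) (compC_proof (proj2_sig K)).

Definition compK (C : G -> Prop) : PhiV s -> Prop := fun w => exists g, pv_set w g /\ C g.

Lemma compK_proof C : is_rcoset H C -> is_component (A := Phi s) (compK C).
Proof.
case=> x ->; exists (vx s i0 x); rewrite conn_char_eq; apply: pred_ext => w.
split; case=> g [h1 h2]; exists g; split => //; move: h2; rewrite rcosetP //; exact: gen_sub.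
Qed.

Definition fC (C : { C : G -> Prop | is_rcoset H C }) :
  { K : mV (Phi s) -> Prop | is_component K } :=
  exist _ (compK (proj1_sig C)) (compK_proof (proj2_sig C)).

Lemma fK_bij : bijective fK.
Proof.
exists fC.
- case=> K hK; apply: sig_hprop_eq; rewrite /=.
  case: (comp_vx hK) => x ex; subst K; apply: pred_ext => w; split.
    case=> g [hg [w' [hw' hg']]]; exists g; split => //; exact: inC_all hw' hg'.
  move=> hw; have [g hg] := pv_nonempty w; exists g; split => //; by exists w.
- case=> C hC; apply: sig_hprop_eq; rewrite /=.
  case: (hC) => x ex; subst C; apply: pred_ext => g; split.
    case=> w [[g' [hg' hc]] hg]; rewrite rcosetP; last exact: gen_sub.
    apply: (inC_all (x0:=x) (w:=w)) => //; exists g'; split => //.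
    by move: hc; rewrite rcosetP //; exact: gen_sub.
  move=> hg; exists (vx s i0 g); split; last exact: pv_vx_self.
  exists g; split => //; exact: pv_vx_self.
Qed.
End Part2.
Section Sub.
Variables (G : group) (I : Type) (s : I -> G).
Notation H := (gen (frange s)).
Notation Hs := (sub_group (frange s)).

Lemma cyc_subP j (z : Hs) : cyc (sub_fam s j) z <-> cyc (s j) (proj1_sig z).
Proof.
split.
- move=> hz; apply: (hz (fun z : Hs => cyc (s j) (proj1_sig z))).
  + split.
    * exact: gen1.
    * move=> x y hx hy; exact: genM.
    * move=> x hx; exact: genV.
  + by move=> a ->; apply: gen_in.
- case: z => z pz /= hz.
  suff : H z /\ forall p : H z, cyc (G := Hs) (sub_fam s j) (exist _ z p).
    by case=> _; apply.
  apply: (hz (fun z => H z /\ forall p : H z, cyc (G := Hs) (sub_fam s j) (exist _ z p))).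
  + split.
    * split; first exact: gen1.
      move=> p; have -> : exist _ (gone G) p = sg_one (frange s) by apply: sg_eq.
      exact: (@gen1 Hs).
    * move=> x y [hx px] [hy py]; split; first exact: genM.
      move=> p; have -> : exist _ (gmul x y) p = sg_mul (exist _ x hx) (exist _ y hy) by apply: sg_eq.
      by apply: (@genM Hs); [apply: px | apply: py].
    * move=> x [hx px]; split; first exact: genV.
      move=> p; have -> : exist _ (ginv x) p = sg_inv (exist _ x hx) by apply: sg_eq.
      by apply: (@genV Hs); apply: px.
  + move=> a ->; split; first by apply: gen_in; exists j.
    move=> p; have -> : exist _ (s j) p = sub_fam s j by apply: sg_eq.
    exact: (@gen_in Hs).
Qed.
End Sub.
Section Iso.
Variables (G : group) (I : Type) (s : I -> G) (x0 : G).
Notation H := (gen (frange s)).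
Notation Hs := (sub_group (frange s)).
Notation s' := (sub_fam s).

Definition Vc := { w : PhiV s | inC x0 w }.

Definition phiset (w : PhiV s) : Hs -> Prop := fun h => pv_set w (gmul (proj1_sig h) x0).

Lemma phiV_proof (w : PhiV s) : inC x0 w -> is_rcoset (cyc (s' (pv_mem w))) (phiset w).
Proof.
move=> hC; case: (vx_surj w) => y; move: (pv_mem w) => j ew; subst w.
have hy : H (gmul y (ginv x0)) by apply: inC_all hC _; apply: pv_vx_self.
exists (exist _ _ hy); apply: pred_ext => h.
rewrite rcosetP; last exact: gen_sub.
rewrite cyc_subP /phiset pv_vx /=; by gsimpl.
Qed.

Definition phiV0 (w : PhiV s) (hw : inC x0 w) : PhiV s' :=
  exist (fun p : I * (Hs -> Prop) => is_rcoset (cyc (s' p.1)) p.2) (pv_mem w, phiset w) (phiV_proof hw).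
Definition phiV (w : Vc) : PhiV s' := phiV0 (proj2_sig w).

Definition psiset (w' : PhiV s') : G -> Prop := fun g => exists h : Hs, pv_set w' h /\ g = gmul (proj1_sig h) x0.

Lemma psiV_proof1 (w' : PhiV s') : is_rcoset (cyc (s (pv_mem w'))) (psiset w').
Proof.
case: (vx_surj w') => hy; move: (pv_mem w') => j ew; subst w'.
exists (gmul (proj1_sig hy) x0); apply: pred_ext => g.
rewrite rcosetP; last exact: gen_sub.
split.
  case=> h [hh ->]; move: hh; rewrite pv_vx cyc_subP /=; by gsimpl.
move=> hg.
have pf : H (gmul g (ginv x0)).
  have := genM (cyc_H hg) (proj2_sig hy); by gsimpl.
exists (exist _ _ pf); split; last by rewrite /= mulgKV.
rewrite pv_vx cyc_subP /=; move: hg; by gsimpl.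
Qed.

Definition psiV0 (w' : PhiV s') : PhiV s :=
  exist (fun p : I * (G -> Prop) => is_rcoset (cyc (s p.1)) p.2) (pv_mem w', psiset w') (psiV_proof1 w').

Lemma psiV_proof2 (w' : PhiV s') : inC x0 (psiV0 w').
Proof.
have [h hh] := pv_nonempty w'.
exists (gmul (proj1_sig h) x0); split; first by exists h.
rewrite mulgK; exact: proj2_sig h.
Qed.

Definition psiV (w' : PhiV s') : Vc := exist _ (psiV0 w') (psiV_proof2 w').

Lemma phi_psi w' : phiV (psiV w') = w'.
Proof.
apply: vertex_eq => //= h; rewrite /phiset /psiset /=; split.
  case=> h1 [p e]; have -> : h = h1 by apply: sg_eq; exact: mulg_canr e.
  exact: p.
by move=> hh; exists h.
Qed.

Lemma psi_phi w : psiV (phiV w) = w.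
Proof.
case: w => w hw; apply: sig_hprop_eq => /=; apply: vertex_eq => //= g.
rewrite /psiset /phiset /=; split.
  by case=> h [p ->].
move=> hg; exists (exist _ _ (inC_all hw hg)); split; last by rewrite mulgKV.
rewrite /pv_set /= /phiset /= mulgKV; exact: hg.
Qed.

Lemma psiV0_phiV0 w (pf : inC x0 w) : psiV0 (phiV0 pf) = w.
Proof. exact: (f_equal (@proj1_sig _ _) (psi_phi (exist _ w pf))). Qed.

Lemma phiV0_irr w (p1 p2 : inC x0 w) : phiV0 p1 = phiV0 p2.
Proof. by rewrite (proof_irrelevance _ p1 p2). Qed.

Lemma psi_phi_iff (u : PhiV s) (pu : inC x0 u) w' : psiV0 w' = u <-> w' = phiV0 pu.
Proof.
split.
  move=> e; rewrite -(phi_psi w'); have -> : psiV w' = exist _ u pu by apply: sig_hprop_eq.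
  by [].
move=> ->; have := psi_phi (exist _ u pu); by move/(f_equal (@proj1_sig _ _)).
Qed.

Definition Ec := { e : PhiE s | exists v, inC x0 v /\ PhiInc e v }.

Lemma ec_label (e : Ec) : H (gmul (edge_label (proj1_sig e)) (ginv x0)).
Proof. case: e => e /= [v [hv hi]]; apply: inC_all hv _; exact: edge_inc. Qed.

Lemma ec_all (e : Ec) w : PhiInc (proj1_sig e) w -> inC x0 w.
Proof. move=> hi; exists (edge_label (proj1_sig e)); split; [exact: edge_inc | exact: ec_label]. Qed.

Definition phiE_set (e : Ec) : PhiV s' -> Prop := fun w' => PhiInc (proj1_sig e) (psiV0 w').
Definition phiE_lab (e : Ec) : Hs := exist _ (gmul (edge_label (proj1_sig e)) (ginv x0)) (ec_label e).

Lemma phiE_proof (e : Ec) : exists u v : PhiV s', [/\ pv_mem u <> pv_mem v,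
   (phiE_set e, phiE_lab e).1 = (fun w => w = u \/ w = v),
   pv_set u (phiE_set e, phiE_lab e).2 & pv_set v (phiE_set e, phiE_lab e).2].
Proof.
have hall := @ec_all e.
rewrite /phiE_set /phiE_lab /=; move: (ec_label e) hall.
case: e => e0 hv /=; clear hv; case: e0 => [[P g] pf] /=. rewrite /edge_label /PhiInc /=.
case: pf => u [v [huv /= hP hu hv']] hl hall.
have pu : inC x0 u by apply: hall; rewrite hP; left.
have pv : inC x0 v by apply: hall; rewrite hP; right.
exists (phiV0 pu), (phiV0 pv); split => //=.
- apply: pred_ext => w'; rewrite hP /=; split.
    by case=> /psi_phi_iff e; [left|right]; apply: e.
  by case=> /psi_phi_iff e; [left|right].
- by rewrite /pv_set /= /phiset /= mulgKV.
- by rewrite /pv_set /= /phiset /= mulgKV.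
Qed.

Definition phiE (e : Ec) : PhiE s' :=
  exist (fun q : (PhiV s' -> Prop) * Hs => exists u v : PhiV s', [/\ pv_mem u <> pv_mem v,
   q.1 = (fun w => w = u \/ w = v), pv_set u q.2 & pv_set v q.2]) (phiE_set e, phiE_lab e) (phiE_proof e).

Definition psiE_set (e' : PhiE s') : PhiV s -> Prop := fun w => exists pf : inC x0 w, PhiInc e' (phiV0 pf).
Definition psiE_lab (e' : PhiE s') : G := gmul (proj1_sig (edge_label e')) x0.

Lemma psiE_proof1 (e' : PhiE s') : exists u v : PhiV s, [/\ pv_mem u <> pv_mem v,
   (psiE_set e', psiE_lab e').1 = (fun w => w = u \/ w = v),
   pv_set u (psiE_set e', psiE_lab e').2 & pv_set v (psiE_set e', psiE_lab e').2].
Proof.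
case: e' => [[P' h] pf]; rewrite /psiE_set /psiE_lab /PhiInc /edge_label /=.
case: pf => u' [v' [huv /= hP hu hv]].
exists (psiV0 u'), (psiV0 v'); split => //=.
- apply: pred_ext => w; rewrite hP /=; split.
    case=> pf [e|e]; [left|right]; apply/esym/psi_phi_iff; exact: (esym e).
  case=> ->; exists (psiV_proof2 _); [left|right]; exact: phi_psi.
- by exists h.
- by exists h.
Qed.

Definition psiE0 (e' : PhiE s') : PhiE s :=
  exist (fun q : (PhiV s -> Prop) * G => exists u v : PhiV s, [/\ pv_mem u <> pv_mem v,
   q.1 = (fun w => w = u \/ w = v), pv_set u q.2 & pv_set v q.2]) (psiE_set e', psiE_lab e') (psiE_proof1 e').

Lemma psiE_proof2 (e' : PhiE s') : exists v, inC x0 v /\ PhiInc (psiE0 e') v.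
Proof.
have [u' hu'] : exists u', PhiInc e' u'.
  case: e' => [[P' h] pf]; rewrite /PhiInc /=; case: pf => u' [v' [_ /= hP _ _]].
  by exists u'; rewrite hP; left.
exists (psiV0 u'); split; first exact: psiV_proof2.
rewrite /PhiInc /= /psiE_set; exists (psiV_proof2 u').
by have -> : phiV0 (psiV_proof2 u') = u' by exact: phi_psi.
Qed.

Definition psiE (e' : PhiE s') : Ec := exist _ (psiE0 e') (psiE_proof2 e').

Lemma phiE_psiE e' : phiE (psiE e') = e'.
Proof.
apply: sig_hprop_eq; rewrite /=.
case: e' => [[P' h] pf] /=; f_equal.
- apply: pred_ext => w'; rewrite /phiE_set /psiE_set /PhiInc /=; split.
    case=> pf'; by have -> : phiV0 pf' = w' by rewrite (phiV0_irr pf' (psiV_proof2 w')); exact: phi_psi.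
  move=> hw; exists (psiV_proof2 w').
  by have -> : phiV0 (psiV_proof2 w') = w' by exact: phi_psi.
- apply: sg_eq; rewrite /= /psiE_lab /edge_label /=; exact: mulgK.
Qed.

Lemma psiE_phiE e : psiE (phiE e) = e.
Proof.
apply: sig_hprop_eq; apply: sig_hprop_eq; rewrite /=.
have hall := @ec_all e.
case: e hall => [[[P g] pf] hv] /= hall; f_equal.
- apply: pred_ext => w; rewrite /psiE_set /phiE_set /PhiInc /= /phiE_set /PhiInc /=; split.
    by case=> pf'; rewrite psiV0_phiV0.
  move=> hw; exists (hall w hw); by rewrite psiV0_phiV0.
- rewrite /psiE_lab /phiE_lab /edge_label /=; exact: mulgKV.
Qed.

Lemma iso_x0 : mg_iso (comp_graph (A := Phi s) (inC x0)) (Phi s').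
Proof.
exists phiV, phiE; split.
- exists psiV; [exact: psi_phi | exact: phi_psi].
- exists psiE; [exact: psiE_phiE | exact: phiE_psiE].
- move=> e v; rewrite /= /PhiInc /= /phiE_set /=.
  by case: v => v pv /=; rewrite psiV0_phiV0.
Qed.
End Iso.

Theorem proposition2 (G : group) (I : Type) (s : I -> G) :
  inhabited I ->
  (forall K : mV (Phi s) -> Prop, is_component K ->
     mg_iso (comp_graph K) (Phi (sub_fam s))) /\
  exists f : { K : mV (Phi s) -> Prop | is_component K } ->
             { C : G -> Prop | is_rcoset (gen (frange s)) C },
    bijective f.
Proof.
case=> i0; split.
- move=> K /comp_vx [x ->]; exact: iso_x0.
- exists (@fK G I s i0); exact: fK_bij.
Qed.
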